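(* Consider the plant $\dot x=f(x,z,u)$, $\epsilon\dot z=g(x,z,u)$ with feedback $u=k(x+e)$, and suppose: (1) $f$, $g$ and $k$ are globally Lipschitz; (2) Assumption A1 holds and the selected root $h$ is globally Lipschitz; (3) there exist symmetric positive definite matrices $P_1\in\mathbb{R}^{n_x\times n_x}$, $P_2\in\mathbb{R}^{n_y\times n_y}$ and constants $\bar\alpha_1,\alpha_2>0$ such that $V_x(x):=x^TP_1x$ and $V_y(x,y):=y^TP_2y$ satisfy, for all $(x,y,e)$, $$\tfrac{\partial V_x}{\partial x}f_s(x,0)\le-\bar\alpha_1V_x(x),\qquad \tfrac{\partial V_y}{\partial y}g_f(x,y,e)\le-\alpha_2V_y(x,y).$$ Then Assumptions A2, A3, A4, A5 and A6 are satisfied (with these $V_x,V_y$, with $\alpha_1=\bar\alpha_1/2$, and with $\gamma_1(s)=\bar\gamma_1s^2$, $\gamma_2(s)=\bar\gamma_2s^2$ for some constants $\bar\gamma_1,\bar\gamma_2\ge0$).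
   Context: Plant: $f:\mathbb{R}^{n_x}\times\mathbb{R}^{n_z}\times\mathbb{R}^{n_u}\to\mathbb{R}^{n_x}$, $g:\mathbb{R}^{n_x}\times\mathbb{R}^{n_z}\times\mathbb{R}^{n_u}\to\mathbb{R}^{n_z}$, $\epsilon>0$, $k:\mathbb{R}^{n_x}\to\mathbb{R}^{n_u}$; $n_y:=n_z$; $|\cdot|$ is the Euclidean norm (induced norm for matrices); $\mathcal{K}_\infty$ denotes continuous, zero-at-zero, strictly increasing, unbounded functions $\mathbb{R}_{\ge0}\to\mathbb{R}_{\ge0}$. Assumption A1: $g(x,z,u)=0$ has $n\ge1$ isolated real roots $z=h_i(x,u)$, each continuously differentiable; one root is fixed and denoted $h$. With $\frac{\partial h}{\partial x}$ the Jacobian of $h$ in its first argument at $(x,k(x+e))$ define: $f_x(x,y,e):=f(x,y+h(x,k(x+e)),k(x+e))$, $h_y(x,y,e):=y+h(x,k(x+e))-h(x,k(x))$, $f_s(x,e):=f(x,h(x,k(x+e)),k(x+e))$, $g_f(x,y,e):=g(x,y+h(x,k(x+e)),k(x+e))$. Assumption A2: there exist a $C^1$ function $V_x:\mathbb{R}^{n_x}\to\mathbb{R}_{\ge0}$, $\underline\alpha_x,\overline\alpha_x,\gamma_1\in\mathcal{K}_\infty$ ($\gamma_1$ continuously differentiable) and $\alpha_1>0$ with $\underline\alpha_x(|x|)\le V_x(x)\le\overline\alpha_x(|x|)$ and $\frac{\partial V_x}{\partial x}f_s(x,e)\le-\alpha_1V_x(x)+\gamma_1(|e|)$ for all $(x,e)$.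 Assumption A3: there exist a $C^1$ function $V_y:\mathbb{R}^{n_x}\times\mathbb{R}^{n_y}\to\mathbb{R}_{\ge0}$, $\underline\alpha_y,\overline\alpha_y\in\mathcal{K}_\infty$, $\alpha_2>0$ with $\underline\alpha_y(|y|)\le V_y(x,y)\le\overline\alpha_y(|y|)$ and $\frac{\partial V_y}{\partial y}g_f(x,y,e)\le-\alpha_2V_y(x,y)$ for all $(x,y,e)$. Assumption A4: there exist $\gamma_2\in\mathcal{K}_\infty$ and $\beta_1,\beta_2,\beta_3>0$ with, for all $(x,y,e)$, $\frac{\partial V_x}{\partial x}[f_x(x,y,e)-f_s(x,e)]\le\beta_1\sqrt{V_x(x)V_y(x,y)}$ and $[\frac{\partial V_y}{\partial x}-\frac{\partial V_y}{\partial y}\frac{\partial h}{\partial x}]f_x(x,y,e)\le\beta_2\sqrt{V_x(x)V_y(x,y)}+\beta_3V_y(x,y)+\gamma_2(|e|)$; and there is $L>0$ with $\gamma_2\circ\gamma_1^{-1}(s)\le Ls$ for all $s\ge0$. Assumption A5: there exist $\lambda_1,\lambda_2>0$ with $V_y(x,h_y(x,y,e))\le V_y(x,y)+\lambda_1\gamma_1(|e|)+\lambda_2\sqrt{\gamma_1(|e|)V_y(x,y)}$ for all $(x,y,e)$. Assumption A6: there exist $M,N\ge0$ such that for all $(x,y)$ and almost all $e$: $\langle\nabla|e|,-f_x(x,y,e)\rangle\le M|e|+N(\sqrt{V_x(x)}+\sqrt{V_y(x,y)})$. *)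

(* Defs.v *)
From Stdlib Require Import Reals.
From mathcomp Require Import ssreflect ssrfun ssrbool eqtype ssrnat fintype bigop.

Set Implicit Arguments.
Unset Strict Implicit.
Local Open Scope R_scope.

Definition vec (n : nat) := 'I_n -> R.
Definition mat (n : nat) := 'I_n -> 'I_n -> R.

Definition vzero {n} : vec n := fun _ => 0.
Definition vadd {n} (u v : vec n) : vec n := fun i => u i + v i.
Definition vsub {n} (u v : vec n) : vec n := fun i => u i - v i.
Definition vopp {n} (u : vec n) : vec n := fun i => - u i.
Definition vscale {n} (a : R) (u : vec n) : vec n := fun i => a * u i.

Definition dot {n} (u v : vec n) : R := \big[Rplus/0]_(i < n) (u i * v i).
Definition vnorm {n} (u : vec n) : R := sqrt (dot u u).
Definition norm2 {n1 n2} (a : vec n1) (b : vec n2) : R := sqrt (dot a a + dot b b).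
Definition norm3 {n1 n2 n3} (a : vec n1) (b : vec n2) (c : vec n3) : R :=
  sqrt (dot a a + dot b b + dot c c).

Definition quad {n} (P : mat n) (x : vec n) : R :=
  \big[Rplus/0]_(i < n) \big[Rplus/0]_(j < n) (x i * P i j * x j).

Definition sym_posdef {n} (P : mat n) : Prop :=
  (forall i j, P i j = P j i) /\ (forall x : vec n, x <> vzero -> 0 < quad P x).

Definition lipschitz1 {n m} (F : vec n -> vec m) : Prop :=
  exists L, forall x x', vnorm (vsub (F x) (F x')) <= L * vnorm (vsub x x').
Definition lipschitz2 {n1 n2 m} (F : vec n1 -> vec n2 -> vec m) : Prop :=
  exists L, forall x u x' u',
    vnorm (vsub (F x u) (F x' u')) <= L * norm2 (vsub x x') (vsub u u').
Definition lipschitz3 {n1 n2 n3 m} (F : vec n1 -> vec n2 -> vec n3 -> vec m) : Prop :=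
  exists L, forall x z u x' z' u',
    vnorm (vsub (F x z u) (F x' z' u')) <= L * norm3 (vsub x x') (vsub z z') (vsub u u').

Definition linear_vv {n m} (D : vec n -> vec m) : Prop :=
  forall c u v i, D (vadd (vscale c u) v) i = c * D u i + D v i.
Definition linear_vR {n} (D : vec n -> R) : Prop :=
  forall c u v, D (vadd (vscale c u) v) = c * D u + D v.
Definition linear_vvv {n1 n2 m} (D : vec n1 -> vec n2 -> vec m) : Prop :=
  forall c a b a' b' i,
    D (vadd (vscale c a) a') (vadd (vscale c b) b') i = c * D a b i + D a' b' i.
Definition linear_vvR {n1 n2} (D : vec n1 -> vec n2 -> R) : Prop :=
  forall c a b a' b',
    D (vadd (vscale c a) a') (vadd (vscale c b) b') = c * D a b + D a' b'.

Definition has_deriv {n m} (F : vec n -> vec m) (x : vec n) (D : vec n -> vec m) : Prop :=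
  linear_vv D /\
  forall eps, 0 < eps -> exists delta, 0 < delta /\ forall v, vnorm v < delta ->
    vnorm (vsub (vsub (F (vadd x v)) (F x)) (D v)) <= eps * vnorm v.

Definition has_derivR {n} (F : vec n -> R) (x : vec n) (D : vec n -> R) : Prop :=
  linear_vR D /\
  forall eps, 0 < eps -> exists delta, 0 < delta /\ forall v, vnorm v < delta ->
    Rabs (F (vadd x v) - F x - D v) <= eps * vnorm v.

Definition has_deriv2 {n1 n2 m} (F : vec n1 -> vec n2 -> vec m) (x : vec n1) (u : vec n2)
  (D : vec n1 -> vec n2 -> vec m) : Prop :=
  linear_vvv D /\
  forall eps, 0 < eps -> exists delta, 0 < delta /\ forall a b, norm2 a b < delta ->
    vnorm (vsub (vsub (F (vadd x a) (vadd u b)) (F x u)) (D a b)) <= eps * norm2 a b.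

Definition has_derivR2 {n1 n2} (F : vec n1 -> vec n2 -> R) (x : vec n1) (y : vec n2)
  (D : vec n1 -> vec n2 -> R) : Prop :=
  linear_vvR D /\
  forall eps, 0 < eps -> exists delta, 0 < delta /\ forall a b, norm2 a b < delta ->
    Rabs (F (vadd x a) (vadd y b) - F x y - D a b) <= eps * norm2 a b.

Definition C1_R {n} (F : vec n -> R) : Prop :=
  exists DF : vec n -> vec n -> R,
    (forall x, has_derivR F x (DF x)) /\
    (forall x eps, 0 < eps -> exists delta, 0 < delta /\ forall x',
       vnorm (vsub x' x) < delta -> forall v, Rabs (DF x' v - DF x v) <= eps * vnorm v).

Definition C1_R2 {n1 n2} (F : vec n1 -> vec n2 -> R) : Prop :=
  exists DF : vec n1 -> vec n2 -> vec n1 -> vec n2 -> R,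
    (forall x y, has_derivR2 F x y (DF x y)) /\
    (forall x y eps, 0 < eps -> exists delta, 0 < delta /\ forall x' y',
       norm2 (vsub x' x) (vsub y' y) < delta -> forall a b,
         Rabs (DF x' y' a b - DF x y a b) <= eps * norm2 a b).

Definition C1_2 {n1 n2 m} (F : vec n1 -> vec n2 -> vec m) : Prop :=
  exists DF : vec n1 -> vec n2 -> vec n1 -> vec n2 -> vec m,
    (forall x u, has_deriv2 F x u (DF x u)) /\
    (forall x u eps, 0 < eps -> exists delta, 0 < delta /\ forall x' u',
       norm2 (vsub x' x) (vsub u' u) < delta -> forall a b,
         vnorm (vsub (DF x' u' a b) (DF x u a b)) <= eps * norm2 a b).

Definition C1_fun (a : R -> R) : Prop :=
  exists d : R -> R, (forall s, derivable_pt_lim a s (d s)) /\ continuity d.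

Definition Kinf (a : R -> R) : Prop :=
  a 0 = 0 /\
  (forall s, 0 <= s -> 0 <= a s) /\
  (forall s t, 0 <= s -> s < t -> a s < a t) /\
  (forall s, 0 <= s -> forall eps, 0 < eps -> exists delta, 0 < delta /\
     forall t, 0 <= t -> Rabs (t - s) < delta -> Rabs (a t - a s) < eps) /\
  (forall M, exists s, 0 <= s /\ M < a s).

Section Plant.
Variables (nx nz nu : nat).
Variable f : vec nx -> vec nz -> vec nu -> vec nx.
Variable g : vec nx -> vec nz -> vec nu -> vec nz.
Variable h : vec nx -> vec nu -> vec nz.
Variable k : vec nx -> vec nu.

(* n_y := n_z *)
Definition f_x (x : vec nx) (y : vec nz) (e : vec nx) : vec nx :=
  f x (vadd y (h x (k (vadd x e)))) (k (vadd x e)).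
Definition h_y (x : vec nx) (y : vec nz) (e : vec nx) : vec nz :=
  vsub (vadd y (h x (k (vadd x e)))) (h x (k x)).
Definition f_s (x : vec nx) (e : vec nx) : vec nx :=
  f x (h x (k (vadd x e))) (k (vadd x e)).
Definition g_f (x : vec nx) (y : vec nz) (e : vec nx) : vec nz :=
  g x (vadd y (h x (k (vadd x e)))) (k (vadd x e)).

Definition Assumption_A1 : Prop :=
  exists (n : nat) (hs : 'I_n -> vec nx -> vec nu -> vec nz),
    (0 < n)%nat /\
    (forall i, C1_2 (hs i)) /\
    (forall x u z, g x z u = vzero <-> exists i, z = hs i x u) /\
    (forall x u i j, i <> j -> hs i x u <> hs j x u) /\
    (exists i0, h = hs i0).

Definition Assumption_A2 (Vx : vec nx -> R) (alpha1 : R) (gamma1 : R -> R) : Prop :=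
  C1_R Vx /\ (forall x, 0 <= Vx x) /\
  (exists aL aU, Kinf aL /\ Kinf aU /\
     forall x, aL (vnorm x) <= Vx x /\ Vx x <= aU (vnorm x)) /\
  Kinf gamma1 /\ C1_fun gamma1 /\ 0 < alpha1 /\
  (forall x e DVx, has_derivR Vx x DVx ->
     DVx (f_s x e) <= - alpha1 * Vx x + gamma1 (vnorm e)).

Definition Assumption_A3 (Vy : vec nx -> vec nz -> R) : Prop :=
  C1_R2 Vy /\ (forall x y, 0 <= Vy x y) /\
  exists aL aU alpha2, Kinf aL /\ Kinf aU /\ 0 < alpha2 /\
    (forall x y, aL (vnorm y) <= Vy x y /\ Vy x y <= aU (vnorm y)) /\
    (forall x y e DyVy, has_derivR (fun y' => Vy x y') y DyVy ->
       DyVy (g_f x y e) <= - alpha2 * Vy x y).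

Definition Assumption_A4 (Vx : vec nx -> R) (Vy : vec nx -> vec nz -> R)
  (gamma1 gamma2 : R -> R) : Prop :=
  Kinf gamma2 /\
  (exists b1 b2 b3, 0 < b1 /\ 0 < b2 /\ 0 < b3 /\
    (forall x y e DVx, has_derivR Vx x DVx ->
       DVx (vsub (f_x x y e) (f_s x e)) <= b1 * sqrt (Vx x * Vy x y)) /\
    (forall x y e DxVy DyVy Jh,
       has_derivR (fun x' => Vy x' y) x DxVy ->
       has_derivR (fun y' => Vy x y') y DyVy ->
       has_deriv (fun x' => h x' (k (vadd x e))) x Jh ->
       DxVy (f_x x y e) - DyVy (Jh (f_x x y e))
         <= b2 * sqrt (Vx x * Vy x y) + b3 * Vy x y + gamma2 (vnorm e))) /\
  (* gamma2 o gamma1^{-1} (t) <= L t for all t >= 0 *)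
  (exists L, 0 < L /\
    forall s t, 0 <= s -> gamma1 s = t -> gamma2 s <= L * t).

Definition Assumption_A5 (Vy : vec nx -> vec nz -> R) (gamma1 : R -> R) : Prop :=
  exists l1 l2, 0 < l1 /\ 0 < l2 /\
    forall x y e,
      Vy x (h_y x y e) <= Vy x y + l1 * gamma1 (vnorm e)
                          + l2 * sqrt (gamma1 (vnorm e) * Vy x y).

(* Assumption A6: for all e at which the gradient of |.| exists
   (i.e. almost all e), <grad|e|, -f_x> <= M|e| + N(sqrt Vx + sqrt Vy). *)
Definition Assumption_A6 (Vx : vec nx -> R) (Vy : vec nx -> vec nz -> R) : Prop :=
  exists M N, 0 <= M /\ 0 <= N /\
    forall x y e Dn, has_derivR (@vnorm nx) e Dn ->
      Dn (vopp (f_x x y e)) <= M * vnorm e + N * (sqrt (Vx x) + sqrt (Vy x y)).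

End Plant.

(* Main.v *)
From HB Require Import structures.
Require Import Defs.
From Stdlib Require Import Reals Lra Psatz FunctionalExtensionality.
From mathcomp Require Import ssreflect ssrfun ssrbool eqtype ssrnat fintype bigop.
Local Open Scope R_scope.

Set Implicit Arguments. Unset Strict Implicit.
HB.instance Definition _ := Monoid.isComLaw.Build R 0 Rplus (fun a b c => esym (Rplus_assoc a b c)) Rplus_comm Rplus_0_l.
HB.instance Definition _ := Monoid.isMulLaw.Build R 0 Rmult Rmult_0_l Rmult_0_r.
HB.instance Definition _ := Monoid.isAddLaw.Build R Rmult Rplus Rmult_plus_distr_r Rmult_plus_distr_l.

Section Sums.
Variable n : nat.
Implicit Types F G : 'I_n -> R.

Lemma sum_le F G : (forall i, F i <= G i) ->
  \big[Rplus/0]_(i<n) F i <= \big[Rplus/0]_(i<n) G i.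
Proof. move=> H; apply: (big_ind2 (fun a b => a <= b)) => //; [lra| move=> *; lra]. Qed.

Lemma sum_ge0 F : (forall i, 0 <= F i) -> 0 <= \big[Rplus/0]_(i<n) F i.
Proof. move=> H; apply: (big_ind (fun a => 0 <= a)) => //; [lra| move=> *; lra]. Qed.

Lemma sum_abs F : Rabs (\big[Rplus/0]_(i<n) F i) <= \big[Rplus/0]_(i<n) Rabs (F i).
Proof.
apply: (big_ind2 (fun a b => Rabs a <= b)) => //.
- rewrite Rabs_R0; lra.
- move=> a b c d H1 H2; apply: Rle_trans (Rabs_triang _ _) _; lra.
- move=> i _; lra.
Qed.

Lemma sum_ext F G : (forall i, F i = G i) ->
  \big[Rplus/0]_(i<n) F i = \big[Rplus/0]_(i<n) G i.
Proof. by move=> H; apply: eq_bigr => i _. Qed.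

Lemma term_le_sum F j : (forall i, 0 <= F i) -> F j <= \big[Rplus/0]_(i<n) F i.
Proof.
move=> H; rewrite (bigD1 j) //=.
have : 0 <= \big[Rplus/0]_(i < n | i != j) F i.
  apply: (big_ind (fun a => 0 <= a)) => //; [lra| move=> *; lra].
move=> HH; rewrite -{1}[F j]Rplus_0_r; exact: Rplus_le_compat_l.
Qed.

Lemma sum_zero F : (forall i, F i = 0) -> \big[Rplus/0]_(i<n) F i = 0.
Proof. by move=> H; apply: big1 => i _. Qed.

End Sums.

Lemma rE1 : Monoid.Law.sort RbaseSymbolsImpl_Rplus__canonical__Monoid_Law = Rplus. Proof. by []. Qed.
Lemma rE2 : SemiGroup.Law.sort RbaseSymbolsImpl_Rplus__canonical__SemiGroup_Law = Rplus. Proof. by []. Qed.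
Lemma rE3 : Monoid.AddLaw.sort RbaseSymbolsImpl_Rplus__canonical__Monoid_AddLaw = Rplus. Proof. by []. Qed.
Lemma rE4 : Monoid.ComLaw.sort RbaseSymbolsImpl_Rplus__canonical__Monoid_ComLaw = Rplus. Proof. by []. Qed.
Lemma rE5 : SemiGroup.ComLaw.sort RbaseSymbolsImpl_Rplus__canonical__SemiGroup_ComLaw = Rplus. Proof. by []. Qed.
Lemma rE6 : Monoid.MulLaw.sort RbaseSymbolsImpl_Rmult__canonical__Monoid_MulLaw = Rmult. Proof. by []. Qed.
Ltac rclean := rewrite ?rE1 ?rE2 ?rE3 ?rE4 ?rE5 ?rE6.

Lemma Rdiv_le_0_compat a b : 0 <= a -> 0 < b -> 0 <= a / b.
Proof. move=> Ha Hb; apply: Rmult_le_pos => //; apply: Rlt_le; exact: Rinv_0_lt_compat. Qed.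

Ltac neq0 := repeat split; try (apply: Rgt_not_eq; first [lra | nra]).

Set Implicit Arguments. Unset Strict Implicit.

Section Vec.
Variable n : nat.
Implicit Types u v w : vec n.

Lemma dot_ext u v u' v' : (forall i, u i * v i = u' i * v' i) -> dot u v = dot u' v'.
Proof. move=> H; exact: sum_ext. Qed.

Lemma dot_ge0 u : 0 <= dot u u.
Proof. apply: sum_ge0 => i; nra. Qed.

Lemma dot_sym u v : dot u v = dot v u.
Proof. apply: dot_ext => i; ring. Qed.

Lemma vnorm_ge0 u : 0 <= vnorm u.
Proof. exact: sqrt_pos. Qed.

Lemma vnorm_sq u : vnorm u * vnorm u = dot u u.
Proof. exact: (sqrt_sqrt _ (dot_ge0 u)). Qed.

Lemma vnorm_ext u v : (forall i, u i = v i) -> vnorm u = vnorm v.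
Proof. move=> H; rewrite /vnorm (@dot_ext u u v v) // => i; by rewrite H. Qed.

Lemma norm_le_of_sq u y : 0 <= y -> dot u u <= y * y -> vnorm u <= y.
Proof.
move=> Hy H; rewrite -(sqrt_square y Hy); apply: sqrt_le_1_alt; lra.
Qed.

Lemma sq_le_of_norm u y : vnorm u <= y -> dot u u <= y * y.
Proof. move=> H; rewrite -vnorm_sq; have := vnorm_ge0 u; nra. Qed.

Lemma comp_le_norm u i : Rabs (u i) <= vnorm u.
Proof.
have H : u i * u i <= dot u u by apply: (@term_le_sum _ (fun j => u j * u j)) => j; nra.
rewrite -vnorm_sq in H; have := vnorm_ge0 u.
case: (Rcase_abs (u i)) => Hs; [rewrite Rabs_left // | rewrite Rabs_right //]; nra.
Qed.

Lemma dot_expand u v t :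
  dot (fun i => u i + t * v i) (fun i => u i + t * v i)
  = dot u u + 2 * t * dot u v + t * t * dot v v.
Proof.
rewrite /dot.
rewrite (@sum_ext _ _ ( fun i => (u i * u i + (2 * t) * (u i * v i)) + (t * t) * (v i * v i))); last by move=> i; ring.
by rewrite big_split big_split /= -!big_distrr.
Qed.

Lemma dot_zero_r u v : (forall i, v i = 0) -> dot u v = 0.
Proof. move=> H; apply: sum_zero => i; rewrite H; ring. Qed.

Lemma CS u v : dot u v * dot u v <= dot u u * dot v v.
Proof.
have [Hv|Hv] : dot v v = 0 \/ 0 < dot v v by have := dot_ge0 v; lra.
- have Hz : forall i, v i = 0.
    move=> i; have := comp_le_norm v i; rewrite /vnorm Hv sqrt_0.
    move=> H; case: (Rcase_abs (v i)) => Hs; [rewrite Rabs_left in H | rewrite Rabs_right in H] => //; lra.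
  rewrite dot_zero_r // Hv; lra.
- set t := - (dot u v / dot v v).
  have := dot_ge0 (fun i => u i + t * v i); rewrite dot_expand /t.
  have := dot_ge0 u => Hu H.
  have E : dot u u + 2 * - (dot u v / dot v v) * dot u v +
    - (dot u v / dot v v) * - (dot u v / dot v v) * dot v v
    = (dot u u * dot v v - dot u v * dot u v) / dot v v by field; lra.
  rewrite E in H.
  have : 0 <= (dot u u * dot v v - dot u v * dot u v) / dot v v * dot v v by nra.
  have -> : (dot u u * dot v v - dot u v * dot u v) / dot v v * dot v v =
            dot u u * dot v v - dot u v * dot u v by field; lra.
  lra.
Qed.

Lemma abs_le_of_sq a y : 0 <= y -> a * a <= y * y -> Rabs a <= y.
Proof.
move=> Hy H; case: (Rcase_abs a) => Hs; [rewrite Rabs_left // | rewrite Rabs_right //]; nra.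
Qed.

Lemma dot_bound u v : Rabs (dot u v) <= vnorm u * vnorm v.
Proof.
apply: abs_le_of_sq; first by apply: Rmult_le_pos; apply: vnorm_ge0.
have := CS u v; rewrite -!vnorm_sq; nra.
Qed.

Lemma vnorm_triang u v : vnorm (vadd u v) <= vnorm u + vnorm v.
Proof.
apply: norm_le_of_sq; first by have := vnorm_ge0 u; have := vnorm_ge0 v; lra.
rewrite /vadd (@dot_ext _ _ (fun i => u i + 1 * v i) (fun i => u i + 1 * v i));
  last by move=> i; ring.
rewrite dot_expand.
have := dot_bound u v; have := vnorm_sq u; have := vnorm_sq v.
have := Rle_abs (dot u v). nra.
Qed.

Lemma vnorm_scale c u : vnorm (vscale c u) = Rabs c * vnorm u.
Proof.
rewrite /vnorm /vscale (_ : dot _ _ = (c * c) * dot u u).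
  rewrite sqrt_mult; [ | nra | apply: dot_ge0]. by rewrite (sqrt_Rsqr_abs c).
rewrite /dot big_distrr /=; apply: sum_ext => i; ring.
Qed.

Lemma vnorm_zero u : (forall i, u i = 0) -> vnorm u = 0.
Proof. move=> H; rewrite /vnorm dot_zero_r // sqrt_0 //. Qed.

Lemma vnorm_opp u : vnorm (vopp u) = vnorm u.
Proof.
rewrite (@vnorm_ext _ (vscale (-1) u)) ?vnorm_scale ?Rabs_Ropp ?Rabs_R1 => [|i]; rewrite /vopp /vscale; ring.
Qed.

Lemma vnorm_sub_triang (a b c : vec n) : vnorm (vsub a c) <= vnorm (vsub a b) + vnorm (vsub b c).
Proof.
rewrite (@vnorm_ext _ (vadd (vsub a b) (vsub b c))); first exact: vnorm_triang.
move=> i; rewrite /vadd /vsub; ring.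
Qed.

Lemma vnorm_sub_sym (a b : vec n) : vnorm (vsub a b) = vnorm (vsub b a).
Proof. rewrite -vnorm_opp; apply: vnorm_ext => i; rewrite /vopp /vsub; ring. Qed.

Lemma vnorm_le_sub (a b : vec n) : vnorm a <= vnorm (vsub a b) + vnorm b.
Proof.
rewrite (@vnorm_ext _ (vadd (vsub a b) b)); first exact: vnorm_triang.
move=> i; rewrite /vadd /vsub; ring.
Qed.

Lemma vnorm_sub_le (a b : vec n) : vnorm (vsub a b) <= vnorm a + vnorm b.
Proof.
rewrite (@vnorm_ext _ (vadd a (vopp b))); first by rewrite -(vnorm_opp b); exact: vnorm_triang.
move=> i; rewrite /vadd /vsub /vopp; ring.
Qed.

Lemma vnorm_sub_add (x e x' e' : vec n) :
  vnorm (vsub (vadd x e) (vadd x' e')) <= vnorm (vsub x x') + vnorm (vsub e e').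
Proof.
rewrite (@vnorm_ext _ (vadd (vsub x x') (vsub e e'))); first exact: vnorm_triang.
move=> i; rewrite /vadd /vsub; ring.
Qed.

Lemma vnorm_sub_addr (y H : vec n) : vnorm (vsub (vadd y H) H) = vnorm y.
Proof. apply: vnorm_ext => i; rewrite /vadd /vsub; ring. Qed.

Lemma vnorm_sub_self (x : vec n) : vnorm (vsub x x) = 0.
Proof. apply: vnorm_zero => i; rewrite /vsub; ring. Qed.

End Vec.

Lemma vnorm_sub0 n (x : vec n) : vnorm (vsub x vzero) = vnorm x.
Proof. apply: vnorm_ext => i; rewrite /vsub /vzero; ring. Qed.

Lemma vnorm_vadd0 n (x x' : vec n) : vnorm (vsub (vadd x vzero) (vadd x' vzero)) = vnorm (vsub x x').
Proof. apply: vnorm_ext => i; rewrite /vadd /vsub /vzero; ring. Qed.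

Lemma sqrt_sum_le a b : 0 <= a -> 0 <= b -> sqrt (a * a + b * b) <= a + b.
Proof.
move=> Ha Hb; rewrite -(sqrt_square (a + b)); last lra.
apply: sqrt_le_1_alt; nra.
Qed.

Lemma norm2_le n1 n2 (a : vec n1) (b : vec n2) : norm2 a b <= vnorm a + vnorm b.
Proof.
rewrite /norm2 -(@vnorm_sq _ a) -(@vnorm_sq _ b); apply: sqrt_sum_le; apply: vnorm_ge0.
Qed.

Lemma norm3_le n1 n2 n3 (a : vec n1) (b : vec n2) (c : vec n3) :
  norm3 a b c <= vnorm a + vnorm b + vnorm c.
Proof.
rewrite /norm3 -(@vnorm_sq _ a) -(@vnorm_sq _ b) -(@vnorm_sq _ c).
have := @vnorm_ge0 _ a; have := @vnorm_ge0 _ b; have := @vnorm_ge0 _ c => Hc Hb Ha.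
rewrite -(sqrt_square (vnorm a + vnorm b + vnorm c)); last lra.
apply: sqrt_le_1_alt; nra.
Qed.

Lemma norm2_ge_l n1 n2 (a : vec n1) (b : vec n2) : vnorm a <= norm2 a b.
Proof.
rewrite /norm2 /vnorm; apply: sqrt_le_1_alt; have := @dot_ge0 _ b; lra.
Qed.

Lemma norm2_ge_r n1 n2 (a : vec n1) (b : vec n2) : vnorm b <= norm2 a b.
Proof.
rewrite /norm2 /vnorm; apply: sqrt_le_1_alt; have := @dot_ge0 _ a; lra.
Qed.

Lemma norm2_zr n1 n2 (a : vec n1) (b : vec n2) : (forall i, b i = 0) -> norm2 a b = vnorm a.
Proof. move=> H; rewrite /norm2 /vnorm (@dot_zero_r _ b b H) Rplus_0_r //. Qed.

Set Implicit Arguments. Unset Strict Implicit.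

Definition bil n (P : mat n) (u v : vec n) : R :=
  \big[Rplus/0]_(i<n) \big[Rplus/0]_(j<n) (u i * P i j * v j).
Definition Psum n (P : mat n) : R := \big[Rplus/0]_(i<n) \big[Rplus/0]_(j<n) Rabs (P i j).

Lemma mul3_le a p b A B : 0 <= p -> 0 <= b -> 0 <= a -> b <= B -> a <= A ->
  a * p * b <= p * (A * B).
Proof.
move=> Hp Hb Ha HB HA; rewrite (_ : a * p * b = p * (a * b)); last ring.
apply: Rmult_le_compat_l => //; apply: Rmult_le_compat => //.
Qed.

Section Bil.
Variable n : nat.
Variable P : mat n.
Implicit Types u v a b x : vec n.

Lemma quad_bil x : quad P x = bil P x x.
Proof. by []. Qed.

Lemma bil_ext u v u' v' : (forall i, u i = u' i) -> (forall i, v i = v' i) ->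
  bil P u v = bil P u' v'.
Proof.
move=> Hu Hv; apply: sum_ext => i; apply: sum_ext => j; by rewrite Hu Hv.
Qed.

Lemma bil_linr x c a b : bil P x (fun i => c * a i + b i) = c * bil P x a + bil P x b.
Proof.
rewrite /bil big_distrr -big_split /=; apply: sum_ext => i.
rewrite big_distrr -big_split /=; apply: sum_ext => j; ring.
Qed.

Lemma bil_linl x c a b : bil P (fun i => c * a i + b i) x = c * bil P a x + bil P b x.
Proof.
rewrite /bil big_distrr -big_split /=; apply: sum_ext => i.
rewrite big_distrr -big_split /=; apply: sum_ext => j; ring.
Qed.

Lemma bil_subr x a b : bil P x (vsub a b) = bil P x a - bil P x b.
Proof.
rewrite (@bil_ext x _ x (fun i => (-1) * b i + a i)) // ?bil_linr; first ring.
move=> i; rewrite /vsub; ring.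
Qed.

Lemma bil_subl x a b : bil P (vsub a b) x = bil P a x - bil P b x.
Proof.
rewrite (@bil_ext _ x (fun i => (-1) * b i + a i) x) // ?bil_linl; first ring.
move=> i; rewrite /vsub; ring.
Qed.

Lemma bil_sym u v : (forall i j, P i j = P j i) -> bil P u v = bil P v u.
Proof.
move=> Hs; rewrite /bil exchange_big /=; apply: sum_ext => i; apply: sum_ext => j.
rewrite Hs; ring.
Qed.

Lemma Psum_ge0 : 0 <= Psum P.
Proof. apply: sum_ge0 => i; apply: sum_ge0 => j; exact: Rabs_pos. Qed.

Lemma bil_bound u v : Rabs (bil P u v) <= Psum P * vnorm u * vnorm v.
Proof.
rewrite /Psum Rmult_assoc big_distrl /=.
apply: Rle_trans (sum_abs _) _; apply: sum_le => i.
rewrite big_distrl /=; apply: Rle_trans (sum_abs _) _; apply: sum_le => j.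
rewrite !Rabs_mult.
have := comp_le_norm u i; have := comp_le_norm v j.
have := Rabs_pos (u i); have := Rabs_pos (v j); have := Rabs_pos (P i j).
move=> H1 H2 H3 H4 H5; apply: mul3_le => //.
Qed.

Lemma quad_expand x v : (forall i j, P i j = P j i) ->
  quad P (fun i => x i + v i) = quad P x + 2 * bil P x v + quad P v.
Proof.
move=> Hs; rewrite quad_bil.
rewrite (@bil_ext _ _ (fun i => 1 * x i + v i) (fun i => 1 * x i + v i)) => [|i|i]; try ring.
rewrite bil_linl !bil_linr (bil_sym v x Hs) /quad /bil; ring.
Qed.

Lemma quad_bound x : Rabs (quad P x) <= Psum P * vnorm x * vnorm x.
Proof. exact: bil_bound. Qed.

End Bil.

Set Implicit Arguments. Unset Strict Implicit.

Lemma dsum_split n (F : 'I_n.+1 -> 'I_n.+1 -> R) :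
  \big[Rplus/0]_(i < n.+1) \big[Rplus/0]_(j < n.+1) F i j =
  F ord0 ord0 + \big[Rplus/0]_(j < n) F ord0 (lift ord0 j)
  + \big[Rplus/0]_(i < n) F (lift ord0 i) ord0
  + \big[Rplus/0]_(i < n) \big[Rplus/0]_(j < n) F (lift ord0 i) (lift ord0 j).
Proof.
rewrite big_ord_recl.
rewrite (@sum_ext _ (fun i => \big[Rplus/0]_(j < n.+1) F (lift ord0 i) j) (fun i => F (lift ord0 i) ord0 + \big[Rplus/0]_(j < n) F (lift ord0 i) (lift ord0 j))); last by move=> i; rewrite big_ord_recl.
rewrite big_split big_ord_recl /=.
ring.
Qed.

Lemma dot_split n (x : vec n.+1) :
  dot x x = x ord0 * x ord0 + @dot n (fun i : 'I_n => x (lift ord0 i)) (fun i : 'I_n => x (lift ord0 i)).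
Proof. by rewrite /dot big_ord_recl. Qed.

Lemma sum_mul_sum n (F G : 'I_n -> R) :
  \big[Rplus/0]_(i < n) \big[Rplus/0]_(j < n) (F i * G j) =
  (\big[Rplus/0]_(i < n) F i) * (\big[Rplus/0]_(j < n) G j).
Proof.
rewrite big_distrl /=; apply: sum_ext => i; by rewrite big_distrr.
Qed.

Lemma quad_lower n (P : mat n) : sym_posdef P ->
  exists c, 0 < c /\ forall x, c * dot x x <= quad P x.
Proof.
elim: n P => [|n IH] P [Hs Hpd].
  exists 1; split; first lra; move=> x; rewrite /dot /quad !big_ord0; lra.
set a := P ord0 ord0.
pose e0 : vec n.+1 := fun j => if j == ord0 then 1 else 0.
have Hl : forall i : 'I_n, (lift ord0 i == ord0) = false.
  by move=> i; apply/negbTE; rewrite eq_sym neq_lift.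
have He : quad P e0 = a.
  rewrite /quad dsum_split /e0 eqxx.
  do 3 (rewrite sum_zero; last by move=> i; rewrite ?Hl; first [ring | apply: sum_zero => j; rewrite ?Hl; ring]).
  rewrite /a; ring.
have Ha : 0 < a.
  rewrite -He; apply: Hpd => E; have := f_equal (fun f => f ord0) E; rewrite /vzero /e0 eqxx /=; lra.
have Ha' : a <> 0 by lra.
pose b : vec n := fun i => P ord0 (lift ord0 i).
pose Q : mat n := fun i j => P (lift ord0 i) (lift ord0 j) - b i * b j / a.
have Hid : forall x : vec n.+1,
  quad P x = a * ((x ord0 + dot b (fun i => x (lift ord0 i)) / a) *
                  (x ord0 + dot b (fun i => x (lift ord0 i)) / a))
             + quad Q (fun i => x (lift ord0 i)).
  move=> x; rewrite /quad dsum_split.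
  rewrite (@sum_ext _ (fun i => \big[Rplus/0]_(j < n) (x (lift ord0 i) * Q i j * x (lift ord0 j)))
     (fun i => \big[Rplus/0]_(j < n) (x (lift ord0 i) * P (lift ord0 i) (lift ord0 j) * x (lift ord0 j)
        + (- / a) * ((x (lift ord0 i) * b i) * (b j * x (lift ord0 j)))))); last first.
    move=> i; apply: sum_ext => j; rewrite /Q; field; exact: Ha'.
  rewrite (@sum_ext _ (fun i => \big[Rplus/0]_(j < n) _) (fun i =>
     \big[Rplus/0]_(j < n) (x (lift ord0 i) * P (lift ord0 i) (lift ord0 j) * x (lift ord0 j))
     + (- / a) * \big[Rplus/0]_(j < n) ((x (lift ord0 i) * b i) * (b j * x (lift ord0 j))))); last first.
    by move=> i; rewrite big_split big_distrr.
  rewrite big_split /= -big_distrr /= sum_mul_sum.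
  rewrite (@sum_ext _ (fun j => x ord0 * P ord0 (lift ord0 j) * x (lift ord0 j))
                      (fun j => x ord0 * (b j * x (lift ord0 j)))); last by move=> j; rewrite /b; ring.
  rewrite (@sum_ext _ (fun i => x (lift ord0 i) * P (lift ord0 i) ord0 * x ord0)
                      (fun i => x ord0 * (b i * x (lift ord0 i)))); last by move=> i; rewrite /b Hs; ring.
  rewrite (@sum_ext _ (fun i => x (lift ord0 i) * b i) (fun i => b i * x (lift ord0 i))); last by move=> i; ring.
  rewrite -big_distrr /= /dot /a.
  set s := \big[Rplus/0]_(i < n) (b i * x (lift ord0 i)).
  set T := \big[Rplus/0]_(i < n) _.
  rclean. field; exact: Ha'.
have HQ : sym_posdef Q.
  split.
    move=> i j; rewrite /Q /= Hs (Rmult_comm (b i) (b j)) //.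
  move=> y Hy.
  pose x : vec n.+1 := fun j => match unlift ord0 j with Some i => y i | None => - (dot b y / a) end.
  have Ex0 : x ord0 = - (dot b y / a) by rewrite /x unlift_none.
  have Ex : forall i, x (lift ord0 i) = y i by move=> i; rewrite /x liftK.
  have Hx : x <> vzero.
    move=> E; apply: Hy; apply: functional_extensionality => i.
    by rewrite -Ex E.
  have := Hpd x Hx; rewrite Hid Ex0.
  rewrite (@dot_ext _ b (fun i => x (lift ord0 i)) b y) => [|i]; last by rewrite Ex.
  rewrite (_ : quad Q (fun i => x (lift ord0 i)) = quad Q y).
    have -> : - (dot b y / a) + dot b y / a = 0 by ring.
    lra.
  by apply: sum_ext => i; apply: sum_ext => j; rewrite !Ex.
have [c' [Hc' Hlow]] := IH Q HQ.
set B := dot b b.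
have HB : 0 <= B by apply: dot_ge0.
set K := 2 / a + (1 + 2 * B / (a * a)) / c'.
have HK : 0 < K.
  rewrite /K; apply: Rplus_lt_le_0_compat; first by apply: Rdiv_lt_0_compat; lra.
  apply: Rdiv_le_0_compat; last lra.
  have : 0 <= 2 * B / (a * a) by apply: Rdiv_le_0_compat; nra.
  lra.
exists (/ K); split; first by apply: Rinv_0_lt_compat.
move=> x.
set y : vec n := fun i : 'I_n => x (lift ord0 i).
set s := dot b y.
set w := x ord0 + s / a.
have Hq := Hid x; rewrite -/y -/s -/w in Hq.
have Hly := Hlow y.
have Hcs : s * s <= B * dot y y by apply: CS.
have Hy0 : 0 <= dot y y by apply: dot_ge0.
rewrite dot_split -/y.
have H1 : x ord0 * x ord0 <= 2 * (w * w) + 2 * (s / a * (s / a)).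
  have -> : x ord0 = w - s / a by rewrite /w; ring.
  have := Rle_0_sqr (w + s / a); rewrite /Rsqr; lra.
have H2 : s / a * (s / a) <= B / (a * a) * dot y y.
  have -> : s / a * (s / a) = (s * s) / (a * a) by field; exact: Ha'.
  have -> : B / (a * a) * dot y y = (B * dot y y) / (a * a) by field; exact: Ha'.
  apply: Rmult_le_compat_r => //; apply: Rlt_le; apply: Rinv_0_lt_compat; nra.
have H3 : x ord0 * x ord0 + dot y y <= 2 * (w * w) + (1 + 2 * B / (a * a)) * dot y y.
  have -> : 2 * B / (a * a) = 2 * (B / (a * a)) by field; exact: Ha'.
  nra.
have H4 : 2 * (w * w) + (1 + 2 * B / (a * a)) * dot y y <= K * quad P x.
  have Hw : 0 <= w * w by nra.
  have HA : 0 <= (1 + 2 * B / (a * a)) / c'.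
    apply: Rdiv_le_0_compat; last lra.
    have : 0 <= 2 * B / (a * a) by apply: Rdiv_le_0_compat; nra.
    lra.
  have E1 : 2 * (w * w) = (2 / a) * (a * (w * w)) by field; exact: Ha'.
  have E2 : (1 + 2 * B / (a * a)) * dot y y = ((1 + 2 * B / (a * a)) / c') * (c' * dot y y)
    by field; split; [exact: Ha' | apply: Rgt_not_eq; exact: Hc'].
  rewrite E1 E2 Hq /K.
  have Hq0 : 0 <= quad Q y.
    have := Rmult_le_pos _ _ (Rlt_le _ _ Hc') Hy0. move=> HH; lra.
  have Hd : 0 <= 2 / a by apply: Rdiv_le_0_compat; lra.
  have := Rmult_le_compat_l _ _ _ HA Hly.
  have := Rmult_le_pos _ _ Hd Hq0.
  have := Rmult_le_pos _ _ HA (Rmult_le_pos _ _ (Rlt_le _ _ Ha) Hw).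
  nra.
have : x ord0 * x ord0 + dot y y <= K * quad P x by lra.
move=> H; apply: (Rmult_le_reg_l K) => //.
rewrite -Rmult_assoc Rinv_r; lra.
Qed.

Set Implicit Arguments. Unset Strict Implicit.

Lemma le_eps a b c : 0 <= c -> (forall eps, 0 < eps -> a <= b + eps * c) -> a <= b.
Proof.
move=> Hc H; apply: Rnot_lt_le => Hab.
have Hp : 0 < (a - b) / (2 * (c + 1)) by apply: Rdiv_lt_0_compat; lra.
have := H _ Hp.
have -> : b + (a - b) / (2 * (c + 1)) * c = b + (a - b) * (c / (2 * (c + 1))) by field; lra.
have : c / (2 * (c + 1)) < 1.
  apply: (Rmult_lt_reg_r (2 * (c + 1))); first lra.
  rewrite /Rdiv Rmult_assoc Rinv_l; lra.
have : 0 <= c / (2 * (c + 1)) by apply: Rdiv_le_0_compat; lra.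
move=> H1 H2 H3; nra.
Qed.

Lemma linR_scale n (D : vec n -> R) : linear_vR D -> forall t v, D (vscale t v) = t * D v.
Proof.
move=> HL t v.
have H0 : D vzero = 0.
  have := HL 1 vzero vzero.
  have -> : vadd (vscale 1 vzero) vzero = (vzero : vec n).
    by apply: functional_extensionality => i; rewrite /vadd /vscale /vzero; ring.
  lra.
have := HL t v vzero; rewrite H0 Rplus_0_r.
have -> // : vadd (vscale t v) vzero = vscale t v.
by apply: functional_extensionality => i; rewrite /vadd /vscale /vzero; ring.
Qed.

Lemma linV_scale n m (D : vec n -> vec m) : linear_vv D -> forall t v i, D (vscale t v) i = t * D v i.
Proof.
move=> HL t v i.
have H0 : forall i, D vzero i = 0.
  move=> j; have := HL 1 vzero vzero j.
  have -> : vadd (vscale 1 vzero) vzero = (vzero : vec n).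
    by apply: functional_extensionality => k; rewrite /vadd /vscale /vzero; ring.
  lra.
have := HL t v vzero i; rewrite H0 Rplus_0_r.
have -> // : vadd (vscale t v) vzero = vscale t v.
by apply: functional_extensionality => k; rewrite /vadd /vscale /vzero; ring.
Qed.

Lemma pick_t n (v : vec n) delta : 0 < delta ->
  exists t, 0 < t /\ vnorm (vscale t v) < delta.
Proof.
move=> Hd; have Hv := vnorm_ge0 v.
exists (delta / (2 * (vnorm v + 1))); split; first by apply: Rdiv_lt_0_compat; lra.
rewrite vnorm_scale Rabs_right; last by apply: Rle_ge; apply: Rdiv_le_0_compat; lra.
have -> : delta / (2 * (vnorm v + 1)) * vnorm v = delta * (vnorm v / (2 * (vnorm v + 1))) by field; lra.
have : vnorm v / (2 * (vnorm v + 1)) < 1.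
  apply: (Rmult_lt_reg_r (2 * (vnorm v + 1))); first lra.
  rewrite /Rdiv Rmult_assoc Rinv_l; lra.
nra.
Qed.

Lemma lin_bound n (D : vec n -> R) K : linear_vR D -> 0 <= K ->
  (forall eps, 0 < eps -> exists delta, 0 < delta /\ forall w, vnorm w < delta ->
     Rabs (D w) <= (K + eps) * vnorm w) ->
  forall v, Rabs (D v) <= K * vnorm v.
Proof.
move=> HL HK H v; apply: (le_eps (vnorm_ge0 v)) => eps He.
have [delta [Hd Hw]] := H eps He.
have [t [Ht Hn]] := pick_t v Hd.
have := Hw _ Hn; rewrite linR_scale // vnorm_scale Rabs_mult Rabs_right; last lra.
move=> H1.
have : t * Rabs (D v) <= t * ((K + eps) * vnorm v) by lra.
move/(Rmult_le_reg_l _ _ _ Ht); lra.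
Qed.

Lemma lin_bound_v n m (D : vec n -> vec m) K : linear_vv D -> 0 <= K ->
  (forall eps, 0 < eps -> exists delta, 0 < delta /\ forall w, vnorm w < delta ->
     vnorm (D w) <= (K + eps) * vnorm w) ->
  forall v, vnorm (D v) <= K * vnorm v.
Proof.
move=> HL HK H v; apply: (le_eps (vnorm_ge0 v)) => eps He.
have [delta [Hd Hw]] := H eps He.
have [t [Ht Hn]] := pick_t v Hd.
have := Hw _ Hn.
rewrite (@vnorm_ext _ (D (vscale t v)) (vscale t (D v))); last by move=> i; rewrite linV_scale.
rewrite !vnorm_scale Rabs_right; last lra.
move=> H1.
have : t * vnorm (D v) <= t * ((K + eps) * vnorm v) by lra.
move/(Rmult_le_reg_l _ _ _ Ht); lra.
Qed.

Lemma deriv_unique n (F : vec n -> R) x D1 D2 :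
  has_derivR F x D1 -> has_derivR F x D2 -> forall v, D1 v = D2 v.
Proof.
move=> [L1 H1] [L2 H2] v.
have HL : linear_vR (fun v => D1 v - D2 v).
  by move=> c u w; rewrite L1 L2; ring.
have := lin_bound HL (Rle_refl 0) _ v.
rewrite Rmult_0_l => H.
suff : Rabs (D1 v - D2 v) <= 0.
  move=> H0; apply: Rminus_diag_uniq.
  case: (Rcase_abs (D1 v - D2 v)) => Hs; [rewrite Rabs_left in H0 | rewrite Rabs_right in H0] => //;
  apply: Rle_antisym; lra.
apply: H => eps He.
have He2 : 0 < eps / 2 by lra.
have [d1 [Hd1 K1]] := H1 _ He2; have [d2 [Hd2 K2]] := H2 _ He2.
exists (Rmin d1 d2); split; first by apply: Rmin_pos.
move=> w Hw.
have := K1 w (Rlt_le_trans _ _ _ Hw (Rmin_l _ _)).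
have := K2 w (Rlt_le_trans _ _ _ Hw (Rmin_r _ _)).
move=> A B.
have := Rabs_triang (F (vadd x w) - F x - D2 w) (- (F (vadd x w) - F x - D1 w)).
rewrite Rabs_Ropp.
have -> : F (vadd x w) - F x - D2 w + - (F (vadd x w) - F x - D1 w) = D1 w - D2 w by ring.
lra.
Qed.

Lemma deriv_lip n (F : vec n -> R) x D L : 0 <= L -> has_derivR F x D ->
  (forall w, Rabs (F (vadd x w) - F x) <= L * vnorm w) ->
  forall v, Rabs (D v) <= L * vnorm v.
Proof.
move=> HL0 [HL H] Hlip; apply: lin_bound => // eps He.
have [d [Hd K]] := H _ He; exists d; split => // w Hw.
have := K w Hw; have := Hlip w.
have := Rabs_triang (F (vadd x w) - F x) (- (F (vadd x w) - F x - D w)).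
rewrite Rabs_Ropp.
have -> : F (vadd x w) - F x + - (F (vadd x w) - F x - D w) = D w by ring.
lra.
Qed.

Lemma deriv_lip_v n m (F : vec n -> vec m) x D L : 0 <= L -> has_deriv F x D ->
  (forall w, vnorm (vsub (F (vadd x w)) (F x)) <= L * vnorm w) ->
  forall v, vnorm (D v) <= L * vnorm v.
Proof.
move=> HL0 [HL H] Hlip; apply: lin_bound_v => // eps He.
have [d [Hd K]] := H _ He; exists d; split => // w Hw.
have := K w Hw; have := Hlip w.
have := vnorm_le_sub (D w) (vsub (F (vadd x w)) (F x)).
rewrite vnorm_sub_sym; lra.
Qed.

Lemma quad_deriv n (P : mat n) x : (forall i j, P i j = P j i) ->
  has_derivR (quad P) x (fun v => 2 * bil P x v).
Proof.
move=> Hs; split.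
  move=> c u v; rewrite (@bil_ext _ P x (vadd (vscale c u) v) x (fun i => c * u i + v i)) // bil_linr; ring.
move=> eps He; have HS := Psum_ge0 P.
exists (eps / (Psum P + 1)); split; first by apply: Rdiv_lt_0_compat; lra.
move=> v Hv.
rewrite (_ : quad P (vadd x v) = quad P (fun i => x i + v i)) // quad_expand //.
have -> : quad P x + 2 * bil P x v + quad P v - quad P x - 2 * bil P x v = quad P v by ring.
apply: Rle_trans (quad_bound P v) _.
have Hn := vnorm_ge0 v.
have : Psum P * vnorm v <= eps.
  have : (Psum P + 1) * vnorm v < eps.
    have := Rmult_lt_compat_l (Psum P + 1) _ _ ltac:(lra) Hv.
    have -> : (Psum P + 1) * (eps / (Psum P + 1)) = eps by field; lra.
    done.
  nra.
nra.
Qed.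

Lemma const_deriv n (c : R) (x : vec n) : has_derivR (fun _ : vec n => c) x (fun _ => 0).
Proof.
split; first by move=> *; ring.
move=> eps He; exists 1; split; first lra.
move=> v _; rewrite (_ : c - c - 0 = 0); last ring.
rewrite Rabs_R0; apply: Rmult_le_pos; [lra | apply: vnorm_ge0].
Qed.

Set Implicit Arguments. Unset Strict Implicit.

Lemma pow2_sq s : s ^ 2 = s * s.
Proof. ring. Qed.

Lemma sq_der c s : derivable_pt_lim (fun s => c * s ^ 2) s (c * (INR 2 * s ^ 1)).
Proof. exact: (derivable_pt_lim_scal (fun y => y ^ 2) c s _ (derivable_pt_lim_pow s 2)). Qed.

Lemma C1_fun_sq c : Defs.C1_fun (fun s => c * s ^ 2).
Proof.
exists (fun s => c * (INR 2 * s ^ 1)); split; first exact: sq_der.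
move=> s; reg.
Qed.

Lemma Kinf_sq c : 0 < c -> Kinf (fun s => c * s ^ 2).
Proof.
move=> Hc; split; first ring.
split; first by move=> s _; apply: Rmult_le_pos; [lra | apply: pow2_ge_0].
split; first by move=> s t Hs Hst; apply: Rmult_lt_compat_l => //; rewrite !pow2_sq; nra.
split.
  move=> s _ eps He.
  have Hd : derivable_pt (fun s => c * s ^ 2) s := exist _ _ (sq_der c s).
  have Hct := derivable_continuous_pt _ _ Hd.
  have [alp [Ha H]] := Hct eps He.
  exists alp; split => // t _ Hts.
  case: (Req_dec t s) => [->|Hne].
    rewrite Rminus_diag Rabs_R0; lra.
  apply: (H t); split; first by split => //; auto.
  exact: Hts.
move=> M; exists (Rabs M / c + 1); split.
  have : 0 <= Rabs M / c by apply: Rdiv_le_0_compat => //; exact: Rabs_pos.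
  lra.
have H0 : 0 <= Rabs M / c by apply: Rdiv_le_0_compat => //; exact: Rabs_pos.
have E : c * (Rabs M / c) = Rabs M by field; neq0.
rewrite pow2_sq.
have -> : c * ((Rabs M / c + 1) * (Rabs M / c + 1)) = c * (Rabs M / c) * (Rabs M / c) + 2 * (c * (Rabs M / c)) + c by ring.
rewrite E.
have : 0 <= Rabs M * (Rabs M / c) by apply: Rmult_le_pos => //; exact: Rabs_pos.
have := Rle_abs M; have := Rabs_pos M; move=> *; lra.
Qed.

Lemma amgm a q X E : 0 < a -> q * X * E <= a * (X * X) + q * q / (4 * a) * (E * E).
Proof.
move=> Ha.
have H : 0 <= (2 * a * X - q * E) * (2 * a * X - q * E) by exact: Rle_0_sqr.
have -> : q * q / (4 * a) * (E * E) = (q * E) * (q * E) / (4 * a) by field; neq0.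
apply: (Rmult_le_reg_l (4 * a)); first lra.
rewrite Rmult_plus_distr_l.
have -> : 4 * a * ((q * E) * (q * E) / (4 * a)) = (q * E) * (q * E) by field; neq0.
nra.
Qed.


Lemma sqrt_lower n (P : mat n) c x : 0 < c -> (forall x, c * dot x x <= quad P x) ->
  sqrt c * vnorm x <= sqrt (quad P x).
Proof.
move=> Hc H; rewrite -(sqrt_square (vnorm x)); last exact: vnorm_ge0.
rewrite -sqrt_mult; [|lra|have := vnorm_ge0 x; nra].
apply: sqrt_le_1_alt; rewrite vnorm_sq; exact: H.
Qed.

Lemma quad_ge0 n (P : mat n) c x : 0 < c -> (forall x, c * dot x x <= quad P x) -> 0 <= quad P x.
Proof. move=> Hc H; have := H x; have := dot_ge0 x; nra. Qed.

Set Implicit Arguments. Unset Strict Implicit.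

Lemma bil_scalel n (P : mat n) t v w : bil P (vscale t v) w = t * bil P v w.
Proof.
rewrite /bil big_distrr; apply: sum_ext => i; rewrite big_distrr; apply: sum_ext => j.
rclean; rewrite /vscale /=; ring.
Qed.

Lemma norm_deriv_bound n (e : vec n) Dn : has_derivR (@vnorm n) e Dn -> forall v, Dn v <= vnorm v.
Proof.
move=> HD v.
have H := deriv_lip (Rle_0_1) HD.
have : Rabs (Dn v) <= 1 * vnorm v.
  apply: H => w; rewrite Rmult_1_l; apply: Rabs_le.
  have := vnorm_triang e w.
  have := vnorm_le_sub e (vadd e w).
  rewrite (@vnorm_ext _ (vsub e (vadd e w)) (vopp w)) ?vnorm_opp; last by move=> i; rewrite /vsub /vadd /vopp; ring.
  move=> *; lra.
have := Rle_abs (Dn v); move=> *; lra.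
Qed.

Lemma quad_C1 n (P : mat n) : (forall i j, P i j = P j i) -> C1_R (quad P).
Proof.
move=> Hs; exists (fun x v => 2 * bil P x v); split; first by move=> x; exact: quad_deriv.
move=> x eps He; have HS := Psum_ge0 P.
exists (eps / (2 * Psum P + 1)); split; first by apply: Rdiv_lt_0_compat; lra.
move=> x' Hx v.
have -> : 2 * bil P x' v - 2 * bil P x v = 2 * bil P (vsub x' x) v by rewrite bil_subl; ring.
rewrite Rabs_mult Rabs_right; last lra.
have := bil_bound P (vsub x' x) v.
have Hn := vnorm_ge0 v; have Hn' := vnorm_ge0 (vsub x' x).
have : (2 * Psum P + 1) * vnorm (vsub x' x) <= eps.
  have := Rmult_lt_compat_l (2 * Psum P + 1) _ _ ltac:(lra) Hx.
  have -> : (2 * Psum P + 1) * (eps / (2 * Psum P + 1)) = eps by field; neq0.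
  move=> *; lra.
move=> H1 H2.
have : 2 * Psum P * vnorm (vsub x' x) <= eps by nra.
have := Rle_abs (bil P (vsub x' x) v).
move=> *; nra.
Qed.

Lemma quad_C1_2 n1 n (P : mat n) : (forall i j, P i j = P j i) ->
  C1_R2 (fun (_ : vec n1) (y : vec n) => quad P y).
Proof.
move=> Hs; exists (fun x y a b => 2 * bil P y b); split.
  move=> x y; split.
    move=> c a b a' b'.
    rewrite (@bil_ext _ P y (vadd (vscale c b) b') y (fun i => c * b i + b' i)) // bil_linr; ring.
  move=> eps He; have HS := Psum_ge0 P.
  exists (eps / (Psum P + 1)); split; first by apply: Rdiv_lt_0_compat; lra.
  move=> a b Hab.
  rewrite (_ : quad P (vadd y b) = quad P (fun i => y i + b i)) // quad_expand //.
  have -> : quad P y + 2 * bil P y b + quad P b - quad P y - 2 * bil P y b = quad P b by ring.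
  apply: Rle_trans (quad_bound P b) _.
  have Hb := norm2_ge_r a b; have Hn := vnorm_ge0 b.
  have : (Psum P + 1) * norm2 a b < eps.
    have := Rmult_lt_compat_l (Psum P + 1) _ _ ltac:(lra) Hab.
    have -> : (Psum P + 1) * (eps / (Psum P + 1)) = eps by field; neq0.
    done.
  move=> H.
  have HN : 0 <= norm2 a b by lra.
  have H1 : vnorm b * vnorm b <= norm2 a b * norm2 a b by apply: Rmult_le_compat.
  have H2 : Psum P * norm2 a b <= eps by nra.
  rewrite Rmult_assoc; apply: Rle_trans (Rmult_le_compat_l _ _ _ HS H1) _.
  rewrite -Rmult_assoc; exact: Rmult_le_compat_r.
move=> x y eps He; have HS := Psum_ge0 P.
exists (eps / (2 * Psum P + 1)); split; first by apply: Rdiv_lt_0_compat; lra.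
move=> x' y' Hx a b.
have -> : 2 * bil P y' b - 2 * bil P y b = 2 * bil P (vsub y' y) b by rewrite bil_subl; ring.
rewrite Rabs_mult Rabs_right; last lra.
have := bil_bound P (vsub y' y) b.
have Hb := norm2_ge_r a b; have Hn := vnorm_ge0 b.
have Hy := norm2_ge_r (vsub x' x) (vsub y' y); have Hn' := vnorm_ge0 (vsub y' y).
have : (2 * Psum P + 1) * vnorm (vsub y' y) <= eps.
  have := Rmult_lt_compat_l (2 * Psum P + 1) _ _ ltac:(lra) Hx.
  have -> : (2 * Psum P + 1) * (eps / (2 * Psum P + 1)) = eps by field; neq0.
  move=> *; nra.
move=> H1 H2.
have : 2 * Psum P * vnorm (vsub y' y) <= eps by nra.
have := Rle_abs (bil P (vsub y' y) b).
move=> *; nra.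
Qed.

Set Implicit Arguments. Unset Strict Implicit.

Lemma lip_pos_l (L N : R) : 0 <= N -> L * N <= Rabs L * N.
Proof. move=> HN; apply: Rmult_le_compat_r => //; exact: Rle_abs. Qed.

Lemma lip3_abs n1 n2 n3 m (F : vec n1 -> vec n2 -> vec n3 -> vec m) : lipschitz3 F ->
  exists L, 0 <= L /\ forall x z u x' z' u',
    vnorm (vsub (F x z u) (F x' z' u')) <= L * norm3 (vsub x x') (vsub z z') (vsub u u').
Proof.
move=> [L H]; exists (Rabs L); split; first exact: Rabs_pos.
move=> *; apply: Rle_trans (H _ _ _ _ _ _) _; apply: lip_pos_l; exact: sqrt_pos.
Qed.

Lemma lip2_abs n1 n2 m (F : vec n1 -> vec n2 -> vec m) : lipschitz2 F ->
  exists L, 0 <= L /\ forall x u x' u',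
    vnorm (vsub (F x u) (F x' u')) <= L * norm2 (vsub x x') (vsub u u').
Proof.
move=> [L H]; exists (Rabs L); split; first exact: Rabs_pos.
move=> *; apply: Rle_trans (H _ _ _ _) _; apply: lip_pos_l; exact: sqrt_pos.
Qed.

Lemma lip1_abs n m (F : vec n -> vec m) : lipschitz1 F ->
  exists L, 0 <= L /\ forall x x', vnorm (vsub (F x) (F x')) <= L * vnorm (vsub x x').
Proof.
move=> [L H]; exists (Rabs L); split; first exact: Rabs_pos.
move=> *; apply: Rle_trans (H _ _) _; apply: lip_pos_l; exact: sqrt_pos.
Qed.

Section Est.
Variables (nx nz nu : nat).
Variable f : vec nx -> vec nz -> vec nu -> vec nx.
Variable h : vec nx -> vec nu -> vec nz.
Variable k : vec nx -> vec nu.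
Variables (Lf Lh Lk : R).

Definition LipHyp : Prop :=
  0 <= Lf /\ 0 <= Lh /\ 0 <= Lk /\
  (forall x z u x' z' u', vnorm (vsub (f x z u) (f x' z' u')) <= Lf * norm3 (vsub x x') (vsub z z') (vsub u u')) /\
  (forall x u x' u', vnorm (vsub (h x u) (h x' u')) <= Lh * norm2 (vsub x x') (vsub u u')) /\
  (forall x x', vnorm (vsub (k x) (k x')) <= Lk * vnorm (vsub x x')).

Lemma est_fs_e : LipHyp -> forall x e,
  vnorm (vsub (f_s f h k x e) (f_s f h k x vzero)) <= Lf * (Lh * Lk + Lk) * vnorm e.
Proof.
move=> [Hf0 [Hh0 [Hk0 [Hf [Hh Hk]]]]] x e; rewrite /f_s.
set K1 := k (vadd x e); set K0 := k (vadd x vzero).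
have HK : vnorm (vsub K1 K0) <= Lk * vnorm e.
  apply: Rle_trans (Hk _ _) _; right; congr (_ * _); apply: vnorm_ext => i.
  rewrite /vsub /vadd /vzero; ring.
have HH : vnorm (vsub (h x K1) (h x K0)) <= Lh * (Lk * vnorm e).
  apply: Rle_trans (Hh _ _ _ _) _; apply: Rmult_le_compat_l => //.
  apply: Rle_trans (norm2_le _ _) _; rewrite vnorm_sub_self; lra.
apply: Rle_trans (Hf _ _ _ _ _ _) _.
have := norm3_le (vsub x x) (vsub (h x K1) (h x K0)) (vsub K1 K0).
rewrite vnorm_sub_self => H3.
have : norm3 (vsub x x) (vsub (h x K1) (h x K0)) (vsub K1 K0) <= (Lh * Lk + Lk) * vnorm e by nra.
move=> H4; have := Rmult_le_compat_l _ _ _ Hf0 H4; move=> *; nra.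
Qed.

Lemma est_fs_x : LipHyp -> forall x x',
  vnorm (vsub (f_s f h k x vzero) (f_s f h k x' vzero)) <= Lf * (1 + Lh * (1 + Lk) + Lk) * vnorm (vsub x x').
Proof.
move=> [Hf0 [Hh0 [Hk0 [Hf [Hh Hk]]]]] x x'; rewrite /f_s.
set K1 := k (vadd x vzero); set K0 := k (vadd x' vzero).
have Hd := vnorm_ge0 (vsub x x').
have HK : vnorm (vsub K1 K0) <= Lk * vnorm (vsub x x').
  by apply: Rle_trans (Hk _ _) _; rewrite vnorm_vadd0; lra.
have HH : vnorm (vsub (h x K1) (h x' K0)) <= Lh * (vnorm (vsub x x') + Lk * vnorm (vsub x x')).
  apply: Rle_trans (Hh _ _ _ _) _; apply: Rmult_le_compat_l => //.
  apply: Rle_trans (norm2_le _ _) _; lra.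
apply: Rle_trans (Hf _ _ _ _ _ _) _.
have := norm3_le (vsub x x') (vsub (h x K1) (h x' K0)) (vsub K1 K0) => H3.
have : norm3 (vsub x x') (vsub (h x K1) (h x' K0)) (vsub K1 K0) <= (1 + Lh * (1 + Lk) + Lk) * vnorm (vsub x x') by nra.
move=> H4; have := Rmult_le_compat_l _ _ _ Hf0 H4; move=> *; nra.
Qed.

Lemma est_fx : LipHyp -> forall x y e,
  vnorm (vsub (f_x f h k x y e) (f_s f h k vzero vzero)) <=
  Lf * (1 + Lh + Lh * Lk + Lk) * (vnorm x + vnorm y + vnorm e).
Proof.
move=> [Hf0 [Hh0 [Hk0 [Hf [Hh Hk]]]]] x y e; rewrite /f_x /f_s.
set K1 := k (vadd x e); set K0 := k (vadd vzero vzero).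
have Hx := vnorm_ge0 x; have Hy := vnorm_ge0 y; have He := vnorm_ge0 e.
have HK : vnorm (vsub K1 K0) <= Lk * (vnorm x + vnorm e).
  apply: Rle_trans (Hk _ _) _; apply: Rmult_le_compat_l => //.
  by apply: Rle_trans (vnorm_sub_add _ _ _ _) _; rewrite !vnorm_sub0; lra.
have HH : vnorm (vsub (h x K1) (h vzero K0)) <= Lh * (vnorm x + Lk * (vnorm x + vnorm e)).
  apply: Rle_trans (Hh _ _ _ _) _; apply: Rmult_le_compat_l => //.
  apply: Rle_trans (norm2_le _ _) _; rewrite vnorm_sub0; lra.
have HZ : vnorm (vsub (vadd y (h x K1)) (h vzero K0)) <= vnorm y + Lh * (vnorm x + Lk * (vnorm x + vnorm e)).
  rewrite (@vnorm_ext _ _ (vadd y (vsub (h x K1) (h vzero K0)))); last by move=> i; rewrite /vadd /vsub; ring.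
  apply: Rle_trans (vnorm_triang _ _) _; lra.
apply: Rle_trans (Hf _ _ _ _ _ _) _.
have := norm3_le (vsub x vzero) (vsub (vadd y (h x K1)) (h vzero K0)) (vsub K1 K0).
rewrite vnorm_sub0 => H3.
have : norm3 (vsub x vzero) (vsub (vadd y (h x K1)) (h vzero K0)) (vsub K1 K0)
   <= (1 + Lh + Lh * Lk + Lk) * (vnorm x + vnorm y + vnorm e).
  have HLL := Rmult_le_pos _ _ Hh0 Hk0.
  have := Rmult_le_pos _ _ HLL Hy; have := Rmult_le_pos _ _ Hh0 Hy;
  have := Rmult_le_pos _ _ Hk0 Hy; have := Rmult_le_pos _ _ Hh0 He.
  move=> *; nra.
move=> H4; have := Rmult_le_compat_l _ _ _ Hf0 H4; move=> *; nra.
Qed.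

Lemma est_fxfs : LipHyp -> forall x y e,
  vnorm (vsub (f_x f h k x y e) (f_s f h k x e)) <= Lf * vnorm y.
Proof.
move=> [Hf0 [Hh0 [Hk0 [Hf [Hh Hk]]]]] x y e; rewrite /f_x /f_s.
apply: Rle_trans (Hf _ _ _ _ _ _) _; apply: Rmult_le_compat_l => //.
apply: Rle_trans (norm3_le _ _ _) _.
rewrite !vnorm_sub_self vnorm_sub_addr; lra.
Qed.

End Est.

Set Implicit Arguments. Unset Strict Implicit.

Lemma fs00_zero n (P : mat n) (Fs : vec n -> vec n) c abar B :
 (forall i j, P i j = P j i) -> 0 < c -> (forall x, c * dot x x <= quad P x) -> 0 <= B -> 0 < abar ->
 (forall x D, has_derivR (quad P) x D -> D (Fs x) <= - abar * quad P x) ->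
 (forall x x', vnorm (vsub (Fs x) (Fs x')) <= B * vnorm (vsub x x')) ->
 vnorm (Fs vzero) = 0.
Proof.
move=> Hs Hc Hlow HB Ha Hyp Hlip.
set F0 := Fs vzero.
have HS := Psum_ge0 P; have HF := vnorm_ge0 F0.
have key : forall t, 0 < t -> bil P F0 F0 <= 0 + t * (Psum P * B * (vnorm F0 * vnorm F0)).
  move=> t Ht; set x := vscale t F0.
  have H1 := Hyp x _ (quad_deriv x Hs); rewrite /= bil_scalel in H1.
  have Hq := quad_ge0 x Hc Hlow.
  have H2 : bil P F0 (Fs x) <= 0.
    apply: Rnot_lt_le => Hlt; have := Rmult_lt_0_compat _ _ Ht Hlt; move=> *; nra.
  have E := bil_subr P F0 (Fs x) F0.
  have Hb := bil_bound P F0 (vsub (Fs x) F0).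
  have Hl := Hlip x vzero; rewrite vnorm_sub0 /x vnorm_scale Rabs_right in Hl; last lra.
  have Hab := Rle_abs (- bil P F0 (vsub (Fs x) F0)); rewrite Rabs_Ropp in Hab.
  have : Psum P * vnorm F0 * vnorm (vsub (Fs x) F0) <= Psum P * vnorm F0 * (B * (t * vnorm F0)).
    apply: Rmult_le_compat_l => //; exact: Rmult_le_pos.
  move=> H3.
  have -> : 0 + t * (Psum P * B * (vnorm F0 * vnorm F0)) = Psum P * vnorm F0 * (B * (t * vnorm F0)) by ring.
  lra.
have HP : bil P F0 F0 <= 0.
  apply: (le_eps (c := Psum P * B * (vnorm F0 * vnorm F0))).
    apply: Rmult_le_pos; [exact: Rmult_le_pos | exact: Rmult_le_pos].
  exact: key.
have Hd := Hlow F0; have Hd0 := dot_ge0 F0.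
have Hdz : dot F0 F0 = 0.
  apply: Rle_antisym => //.
  rewrite quad_bil in Hd.
  have : c * dot F0 F0 <= 0 by lra.
  move=> H; apply: Rnot_lt_le => Hlt; have := Rmult_lt_0_compat _ _ Hc Hlt; lra.
by rewrite /vnorm Hdz sqrt_0.
Qed.

Set Implicit Arguments. Unset Strict Implicit.

Lemma mul2_bound K a b r1 r2 A B : 0 <= K -> 0 <= a -> 0 <= b -> 0 < r1 -> 0 < r2 ->
  r1 * a <= A -> r2 * b <= B -> K * (a * b) <= K / (r1 * r2) * (A * B).
Proof.
move=> HK Ha Hb H1 H2 HA HB.
have H : (r1 * a) * (r2 * b) <= A * B.
  apply: Rmult_le_compat => //; apply: Rmult_le_pos; lra.
have -> : K * (a * b) = K / (r1 * r2) * ((r1 * a) * (r2 * b)) by field; neq0.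
apply: Rmult_le_compat_l => //; apply: Rdiv_le_0_compat => //; nra.
Qed.

Lemma mul1_bound K a r A : 0 <= K -> 0 < r -> r * a <= A -> K * a <= K / r * A.
Proof.
move=> HK Hr HA.
have -> : K * a = K / r * (r * a) by field; neq0.
apply: Rmult_le_compat_l => //; apply: Rdiv_le_0_compat => //.
Qed.

Lemma quad_upper n (P : mat n) x : quad P x <= (Psum P + 1) * (vnorm x * vnorm x).
Proof.
have := quad_bound P x; have := Rle_abs (quad P x); have := vnorm_ge0 x.
move=> H0 H1 H2; have := Rmult_le_pos _ _ H0 H0; move=> *; nra.
Qed.

Lemma Kinf_bounds n (P : mat n) c : 0 < c -> (forall x, c * dot x x <= quad P x) ->
  exists aL aU, Kinf aL /\ Kinf aU /\
     forall x, aL (vnorm x) <= quad P x /\ quad P x <= aU (vnorm x).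
Proof.
move=> Hc Hl; exists (fun s => c * s ^ 2), (fun s => (Psum P + 1) * s ^ 2).
have HS := Psum_ge0 P.
split; first exact: Kinf_sq.
split; first by apply: Kinf_sq; lra.
move=> x; rewrite !pow2_sq vnorm_sq; split; first exact: Hl.
rewrite -vnorm_sq; exact: quad_upper.
Qed.

Unset Implicit Arguments.

Theorem proposition1 (nx nz nu : nat)
  (f : vec nx -> vec nz -> vec nu -> vec nx)
  (g : vec nx -> vec nz -> vec nu -> vec nz)
  (k : vec nx -> vec nu) (eps : R)
  (h : vec nx -> vec nu -> vec nz)
  (P1 : mat nx) (P2 : mat nz) (abar1 alpha2 : R) :
  0 < eps ->
  lipschitz3 f -> lipschitz3 g -> lipschitz1 k ->
  Assumption_A1 g h -> lipschitz2 h ->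
  sym_posdef P1 -> sym_posdef P2 -> 0 < abar1 -> 0 < alpha2 ->
  (forall x DVx, has_derivR (quad P1) x DVx ->
     DVx (f_s f h k x vzero) <= - abar1 * quad P1 x) ->
  (forall x y e DyVy, has_derivR (fun y' => quad P2 y') y DyVy ->
     DyVy (g_f g h k x y e) <= - alpha2 * quad P2 y) ->
  exists gbar1 gbar2 : R, 0 <= gbar1 /\ 0 <= gbar2 /\
    Assumption_A2 f h k (quad P1) (abar1 / 2) (fun s => gbar1 * s ^ 2) /\
    Assumption_A3 g h k (fun _ y => quad P2 y) /\
    Assumption_A4 f h k (quad P1) (fun _ y => quad P2 y)
       (fun s => gbar1 * s ^ 2) (fun s => gbar2 * s ^ 2) /\
    Assumption_A5 h k (fun _ y => quad P2 y) (fun s => gbar1 * s ^ 2) /\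
    Assumption_A6 f h k (quad P1) (fun _ y => quad P2 y).
Proof.
move=> Heps Hf Hg Hk HA1 Hh HP1 HP2 Ha1 Ha2 Hfs Hgf.
have [Lf [Lf0 Hf']] := lip3_abs Hf.
have [Lh [Lh0 Hh']] := lip2_abs Hh.
have [Lk [Lk0 Hk']] := lip1_abs Hk.
have HL : LipHyp f h k Lf Lh Lk by repeat split.
have Hs1 := proj1 HP1; have Hs2 := proj1 HP2.
have [c1 [Hc1 Hlow1]] := quad_lower HP1.
have [c2 [Hc2 Hlow2]] := quad_lower HP2.
have HS1 : 0 <= Psum P1 by apply: Psum_ge0.
have HS2 : 0 <= Psum P2 by apply: Psum_ge0.
have HLL : 0 <= Lh * Lk by apply: Rmult_le_pos.
have HB0 : 0 <= Lf * (1 + Lh * (1 + Lk) + Lk).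
  apply: Rmult_le_pos => //; have := Rmult_le_pos _ _ Lh0 (ltac:(lra) : 0 <= 1 + Lk); lra.
have Hf00 : vnorm (f_s f h k vzero vzero) = 0.
  exact: (@fs00_zero nx P1 (fun x => f_s f h k x vzero) c1 abar1 _ Hs1 Hc1 Hlow1 HB0 Ha1 Hfs (est_fs_x HL)).
set A := Lf * (Lh * Lk + Lk).
have HA : 0 <= A by apply: Rmult_le_pos => //; lra.
set alpha := abar1 * c1 / 2.
have Halpha : 0 < alpha by rewrite /alpha; apply: Rdiv_lt_0_compat; [nra | lra].
set q := 2 * (Psum P1) * A.
have Hq : 0 <= q by rewrite /q; have := Rmult_le_pos _ _ HS1 HA; lra.
set gbar1 := q * q / (4 * alpha) + 1.
have Hg1 : 0 < gbar1.
  have : 0 <= q * q / (4 * alpha) by apply: Rdiv_le_0_compat; nra.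
  rewrite /gbar1; lra.
set Kw := Lf * (1 + Lh + Lh * Lk + Lk).
have HKw : 0 <= Kw by apply: Rmult_le_pos => //; lra.
set Kb := 2 * (Psum P2) * Lh * Kw.
have HKb : 0 <= Kb.
  rewrite /Kb; apply: Rmult_le_pos => //; apply: Rmult_le_pos => //; lra.
set gbar2 := Kb / 2 + 1.
have Hg2 : 0 < gbar2 by rewrite /gbar2; lra.
set r1 := sqrt c1; set r2 := sqrt c2.
have Hr1 : 0 < r1 by apply: sqrt_lt_R0.
have Hr2 : 0 < r2 by apply: sqrt_lt_R0.
have Hsx : forall x, r1 * vnorm x <= sqrt (quad P1 x) by move=> x; exact: sqrt_lower.
have Hsy : forall y, r2 * vnorm y <= sqrt (quad P2 y) by move=> y; exact: sqrt_lower.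
have HQ1 : forall x, 0 <= quad P1 x by move=> x; exact: (quad_ge0 x Hc1 Hlow1).
have HQ2 : forall y, 0 <= quad P2 y by move=> y; exact: (quad_ge0 y Hc2 Hlow2).
have HD1 : forall x D, has_derivR (quad P1) x D -> forall v, D v = 2 * bil P1 x v.
  move=> x D HD v; exact: (deriv_unique HD (quad_deriv x Hs1)).
have HD2 : forall y D, has_derivR (fun y' => quad P2 y') y D -> forall v, D v = 2 * bil P2 y v.
  move=> y D HD v; exact: (deriv_unique HD (quad_deriv y Hs2)).
have Hw : forall x y e, vnorm (f_x f h k x y e) <= Kw * (vnorm x + vnorm y + vnorm e).
  move=> x y e; have := vnorm_le_sub (f_x f h k x y e) (f_s f h k vzero vzero).
  rewrite Hf00; have := est_fx HL x y e; rewrite -/Kw; move=> *; lra.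
exists gbar1, gbar2; split; first lra; split; first lra.
split.
  split; first exact: quad_C1.
  split; first exact: HQ1.
  split; first exact: Kinf_bounds Hc1 Hlow1.
  split; first exact: Kinf_sq.
  split; first exact: C1_fun_sq.
  split; first lra.
  move=> x e D HD; rewrite (HD1 x D HD) pow2_sq.
  have H0 := Hfs x _ (quad_deriv x Hs1); rewrite /= in H0.
  have E := bil_subr P1 x (f_s f h k x e) (f_s f h k x vzero).
  have Hb := bil_bound P1 x (vsub (f_s f h k x e) (f_s f h k x vzero)).
  have Hab := Rle_abs (bil P1 x (vsub (f_s f h k x e) (f_s f h k x vzero))).
  have He := est_fs_e HL x e; rewrite -/A in He.
  have Hx := vnorm_ge0 x; have Hen := vnorm_ge0 e.
  have H1 : (Psum P1) * vnorm x * vnorm (vsub (f_s f h k x e) (f_s f h k x vzero)) <= (Psum P1) * vnorm x * (A * vnorm e).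
    apply: Rmult_le_compat_l => //; exact: Rmult_le_pos.
  have H2 := amgm q (vnorm x) (vnorm e) Halpha.
  have H3 : alpha * (vnorm x * vnorm x) <= abar1 / 2 * quad P1 x.
    have := Hlow1 x; rewrite -vnorm_sq /alpha => Hl.
    have -> : abar1 * c1 / 2 * (vnorm x * vnorm x) = abar1 / 2 * (c1 * (vnorm x * vnorm x)) by field.
    apply: Rmult_le_compat_l => //; lra.
  have E2 : (Psum P1) * vnorm x * (A * vnorm e) = q / 2 * vnorm x * vnorm e by rewrite /q; field.
  have E3 : gbar1 * (vnorm e * vnorm e) = q * q / (4 * alpha) * (vnorm e * vnorm e) + vnorm e * vnorm e
    by rewrite /gbar1; ring.
  have : 0 <= vnorm e * vnorm e by nra.
  move=> *; lra.
split.
  split; first exact: quad_C1_2.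
  split; first by move=> *; exact: HQ2.
  have [aL [aU [HaL [HaU Hb]]]] := Kinf_bounds Hc2 Hlow2.
  exists aL, aU, alpha2.
  split; first exact: HaL. split; first exact: HaU. split; first exact: Ha2.
  split; first by move=> x y; exact: Hb.
  move=> x y e D HD; exact: Hgf HD.
split.
  rewrite /Assumption_A4; split; first exact: Kinf_sq Hg2.
  split; last first.
    exists (gbar2 / gbar1); split; first by apply: Rdiv_lt_0_compat.
    move=> s t _ <-; right; field; neq0.
  exists (2 * (Psum P1) * Lf / (r1 * r2) + 1), (Kb / (r1 * r2) + 1), (3 * Kb / (2 * c2) + 1).
  have Hr12 : 0 < r1 * r2 by nra.
  have Hb1 : 0 <= 2 * (Psum P1) * Lf / (r1 * r2).
    apply: Rdiv_le_0_compat => //; have := Rmult_le_pos _ _ HS1 Lf0; lra.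
  have Hb2 : 0 <= Kb / (r1 * r2) by apply: Rdiv_le_0_compat.
  have Hb3 : 0 <= 3 * Kb / (2 * c2) by apply: Rdiv_le_0_compat; lra.
  split; first lra; split; first lra; split; first lra.
  have Hsq : forall x y, sqrt (quad P1 x * quad P2 y) = sqrt (quad P1 x) * sqrt (quad P2 y).
    by move=> x y; apply: sqrt_mult.
  have HsQ1 : forall x, 0 <= sqrt (quad P1 x) by move=> x; exact: sqrt_pos.
  have HsQ2 : forall y, 0 <= sqrt (quad P2 y) by move=> y; exact: sqrt_pos.
  split.
    move=> x y e D HD; rewrite (HD1 x D HD) Hsq.
    have Hb := bil_bound P1 x (vsub (f_x f h k x y e) (f_s f h k x e)).
    have Hab := Rle_abs (bil P1 x (vsub (f_x f h k x y e) (f_s f h k x e))).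
    have He := est_fxfs HL x y e.
    have Hx := vnorm_ge0 x; have Hy := vnorm_ge0 y.
    have H1 : (Psum P1) * vnorm x * vnorm (vsub (f_x f h k x y e) (f_s f h k x e)) <= (Psum P1) * vnorm x * (Lf * vnorm y).
      apply: Rmult_le_compat_l => //; exact: Rmult_le_pos.
    have H2 := mul2_bound (ltac:(have := Rmult_le_pos _ _ HS1 Lf0; lra) : 0 <= 2 * (Psum P1) * Lf) Hx Hy Hr1 Hr2 (Hsx x) (Hsy y).
    have H3 : 0 <= sqrt (quad P1 x) * sqrt (quad P2 y) by apply: Rmult_le_pos.
    have E : (Psum P1) * vnorm x * (Lf * vnorm y) = (2 * (Psum P1) * Lf) * (vnorm x * vnorm y) / 2 by field.
    move=> *; nra.
  move=> x y e Dx Dy Jh HDx HDy HJ.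
  have HDx0 : Dx (f_x f h k x y e) = 0 := deriv_unique HDx (const_deriv (quad P2 y) x) _.
  rewrite HDx0 (HD2 y Dy HDy) Hsq.
  set w := f_x f h k x y e.
  have HJw : vnorm (Jh w) <= Lh * vnorm w.
    apply: (deriv_lip_v Lh0 HJ) => v.
    apply: Rle_trans (Hh' _ _ _ _) _; right; congr (_ * _).
    rewrite norm2_zr; last by move=> i; rewrite /vsub; ring.
    apply: vnorm_ext => i; rewrite /vsub /vadd; ring.
  have Hb := bil_bound P2 y (Jh w).
  have Hab := Rle_abs (- bil P2 y (Jh w)); rewrite Rabs_Ropp in Hab.
  have Hx := vnorm_ge0 x; have Hy := vnorm_ge0 y; have Hen := vnorm_ge0 e.
  have Hwn := Hw x y e; rewrite -/w in Hwn.
  have H1 : vnorm (Jh w) <= Lh * Kw * (vnorm x + vnorm y + vnorm e).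
    apply: Rle_trans HJw _; rewrite Rmult_assoc; exact: Rmult_le_compat_l.
  have H2 : (Psum P2) * vnorm y * vnorm (Jh w) <= (Psum P2) * vnorm y * (Lh * Kw * (vnorm x + vnorm y + vnorm e)).
    apply: Rmult_le_compat_l => //; exact: Rmult_le_pos.
  have E : 2 * ((Psum P2) * vnorm y * (Lh * Kw * (vnorm x + vnorm y + vnorm e)))
         = Kb * (vnorm x * vnorm y) + Kb * (vnorm y * vnorm y) + Kb * (vnorm y * vnorm e)
    by rewrite /Kb; ring.
  have H3 := mul2_bound HKb Hx Hy Hr1 Hr2 (Hsx x) (Hsy y).
  have H4 : Kb * (vnorm y * vnorm e) <= Kb / 2 * (vnorm y * vnorm y) + Kb / 2 * (vnorm e * vnorm e).
    have : 0 <= Kb * ((vnorm y - vnorm e) * (vnorm y - vnorm e)).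
      apply: Rmult_le_pos => //; exact: Rle_0_sqr.
    move=> *; nra.
  have H5 : 3 * Kb / 2 * (vnorm y * vnorm y) <= 3 * Kb / (2 * c2) * quad P2 y.
    have := Hlow2 y; rewrite -vnorm_sq => Hl.
    have -> : 3 * Kb / 2 * (vnorm y * vnorm y) = 3 * Kb / (2 * c2) * (c2 * (vnorm y * vnorm y))
      by field; neq0.
    apply: Rmult_le_compat_l => //.
  have H6 : 0 <= sqrt (quad P1 x) * sqrt (quad P2 y) by apply: Rmult_le_pos.
  have H7 := HQ2 y.
  have H8 : 0 <= vnorm e * vnorm e by nra.
  rewrite pow2_sq /gbar2.
  move=> *; nra.
split.
  set m := Lh * Lk.
  have Hm : 0 <= m by [].
  set sg := sqrt gbar1.
  have Hsg : 0 < sg by apply: sqrt_lt_R0.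
  exists ((Psum P2) * m * m / gbar1 + 1), (2 * (Psum P2) * m / (sg * r2) + 1).
  have Hl1 : 0 <= (Psum P2) * m * m / gbar1.
    apply: Rdiv_le_0_compat => //; apply: Rmult_le_pos => //; exact: Rmult_le_pos.
  have Hl2 : 0 <= 2 * (Psum P2) * m / (sg * r2).
    apply: Rdiv_le_0_compat; [have := Rmult_le_pos _ _ HS2 Hm; lra | nra].
  split; first lra; split; first lra.
  move=> x y e.
  set d := vsub (h x (k (vadd x e))) (h x (k x)).
  have Hd : vnorm d <= m * vnorm e.
    apply: Rle_trans (Hh' _ _ _ _) _.
    rewrite /m Rmult_assoc; apply: Rmult_le_compat_l => //.
    apply: Rle_trans (norm2_le _ _) _; rewrite vnorm_sub_self Rplus_0_l.
    apply: Rle_trans (Hk' _ _) _; right; congr (_ * _).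
    apply: vnorm_ext => i; rewrite /vsub /vadd; ring.
  rewrite /= (_ : quad P2 (h_y h k x y e) = quad P2 (fun i => y i + d i)); last first.
    rewrite !quad_bil; apply: bil_ext => i; rewrite /h_y /d /vsub /vadd; ring.
  rewrite quad_expand //.
  have Hy := vnorm_ge0 y; have Hen := vnorm_ge0 e; have Hdn := vnorm_ge0 d.
  have Hqd := quad_upper P2 d.
  have Hqd' := quad_bound P2 d; have Hqa := Rle_abs (quad P2 d).
  have Hb := bil_bound P2 y d; have Hab := Rle_abs (bil P2 y d).
  have Hdd : vnorm d * vnorm d <= m * vnorm e * (m * vnorm e) by apply: Rmult_le_compat.
  have H1 : quad P2 d <= (Psum P1) * 0 + (Psum P2) * (m * vnorm e * (m * vnorm e)).
    rewrite Rmult_0_r Rplus_0_l; apply: Rle_trans Hqa _; apply: Rle_trans Hqd' _.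
    rewrite Rmult_assoc; exact: Rmult_le_compat_l.
  have H2 : (Psum P2) * vnorm y * vnorm d <= (Psum P2) * vnorm y * (m * vnorm e).
    apply: Rmult_le_compat_l => //; exact: Rmult_le_pos.
  have Esq : sqrt (gbar1 * vnorm e ^ 2 * quad P2 y) = sg * vnorm e * sqrt (quad P2 y).
    rewrite sqrt_mult; [|apply: Rmult_le_pos; [lra|exact: pow2_ge_0] | exact: HQ2].
    rewrite sqrt_mult; [|lra|exact: pow2_ge_0].
    by rewrite sqrt_pow2.
  rewrite Esq.
  have H3 := mul2_bound (ltac:(have := Rmult_le_pos _ _ HS2 Hm; lra) : 0 <= 2 * (Psum P2) * m) Hen Hy Hsg Hr2
    (Rle_refl (sg * vnorm e)) (Hsy y).
  have H4 : (Psum P2) * (m * vnorm e * (m * vnorm e)) = (Psum P2) * m * m / gbar1 * (gbar1 * vnorm e ^ 2)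
    by field; neq0.
  have H5 : 0 <= gbar1 * vnorm e ^ 2 by apply: Rmult_le_pos; [lra | exact: pow2_ge_0].
  have H6 : 0 <= sg * vnorm e * sqrt (quad P2 y).
    apply: Rmult_le_pos; [apply: Rmult_le_pos; lra | exact: sqrt_pos].
  have E : (Psum P2) * vnorm y * (m * vnorm e) = 2 * (Psum P2) * m * (vnorm e * vnorm y) / 2 by field.
  rewrite Rmult_0_r Rplus_0_l in H1.
  move=> *; nra.
exists Kw, (Kw / r1 + Kw / r2).
have HN1 : 0 <= Kw / r1 by apply: Rdiv_le_0_compat.
have HN2 : 0 <= Kw / r2 by apply: Rdiv_le_0_compat.
split => //; split; first lra.
move=> x y e Dn HDn.
apply: Rle_trans (norm_deriv_bound HDn _) _.
rewrite vnorm_opp; apply: Rle_trans (Hw x y e) _.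
have H1 := mul1_bound HKw Hr1 (Hsx x).
have H2 := mul1_bound HKw Hr2 (Hsy y).
have := sqrt_pos (quad P1 x); have := sqrt_pos (quad P2 y).
move=> *; nra.
Qed.
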